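(* Let $s\geq 2$ and let $d$ be a positive divisor of $s$. In $G_{(s,0)}$, the subgroup $H=\langle u^d\rangle\rtimes\langle\rho_0\rangle$ is core-free and $|G_{(s,0)}:H|=3ds$. Consequently $G_{(s,0)}$ has a faithful transitive permutation representation of degree $3ds$.
   Context: $G_{(s,0)}$ is the group of the toroidal hypermap $(3,3,3)_{(s,0)}$: the Coxeter group $[3,3,3]=\langle\rho_0,\rho_1,\rho_2\mid \rho_i^2=1,\ (\rho_i\rho_j)^3=1\ (i\neq j)\rangle$ factored by $(\rho_0\rho_1\rho_2\rho_1)^s$; it has order $6s^2$. Here $u=\rho_0\rho_1\rho_2\rho_1$ (a translation of order $s$, with $\rho_0 u\rho_0=u^{-1}$). A subgroup is core-free if it contains no nontrivial normal subgroup of the group. *)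

(* Defs.v *)
From mathcomp Require Import all_boot all_fingroup.
Set Implicit Arguments.
Unset Strict Implicit.
Unset Printing Implicit Defensive.
Local Open Scope group_scope.

(* Defining relations of G_(s,0) = [3,3,3] / << (r0 r1 r2 r1)^s >>. *)
Definition rels_G (s : nat) (gT : finGroupType) (r0 r1 r2 : gT) : Prop :=
  [/\ r0 ^+ 2 = 1, r1 ^+ 2 = 1 & r2 ^+ 2 = 1] /\
  [/\ (r0 * r1) ^+ 3 = 1, (r0 * r2) ^+ 3 = 1 & (r1 * r2) ^+ 3 = 1] /\
  (r0 * r1 * r2 * r1) ^+ s = 1.

Definition presents_G (s : nat) (gT : finGroupType) (G : {group gT})
  (r0 r1 r2 : gT) : Prop :=
  [/\ G :=: <<[set r0; r1; r2]>>,
      rels_G s r0 r1 r2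
    & forall (rT : finGroupType) (h0 h1 h2 : rT), rels_G s h0 h1 h2 ->
        exists f : {morphism G >-> rT}, [/\ f r0 = h0, f r1 = h1 & f r2 = h2]].

Definition core_free (gT : finGroupType) (H G : {set gT}) : Prop :=
  forall N : {group gT}, N <| G -> N \subset H -> N :=: 1.

(* Main.v *)
Require Import Defs.
From mathcomp Require Import all_boot all_fingroup.
From mathcomp Require Import all_solvable zify.
From mathcomp Require all_algebra ring.

Module Arith.
Set Implicit Arguments.
Unset Strict Implicit.
Local Open Scope nat_scope.
Lemma arith (s U V T UI BC B W WI TW TI G : nat) :
 (1 < s -> U*V = T*UI -> BC*B = W*WI -> T*W = TW*TI -> G <= TW ->
 0 < UI -> 0 < WI -> 0 < TI -> 6*s*s <= G -> U <= s -> V <= s -> BC <= 3 -> B <= 2 ->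
 [/\ U = s, UI = 1, TI = 1 & G = 6*s*s])%N.
Proof.
move=> s2 cT cW cTW GTW p1 p2 p3 low ou ov obc ob.
have hW : W <= 6 by nia.
have hUV : U * V <= s * s by nia.
have hT : T <= s * s by nia.
have hTW : T * W <= s * s * 6 by nia.
have hTI : TI = 1 by nia.
have eG : G = 6 * s * s by nia.
have eT : T = s * s by nia.
have eUI : UI = 1 by nia.
have eU : U = s by nia.
by [].
Qed.

End Arith.
Import Arith.

Module Model.
Import all_algebra ring.
Import GRing.Theory.
Set Implicit Arguments.
Unset Strict Implicit.
Unset Printing Implicit Defensive.
Local Open Scope group_scope.

Definition mm0 s (p : 'Z_s * 'Z_s) : 'Z_s * 'Z_s := (1 - p.1 - p.2, p.2)%R.
Definition mm1 s (p : 'Z_s * 'Z_s) : 'Z_s * 'Z_s := (p.2, p.1).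
Definition mm2 s (p : 'Z_s * 'Z_s) : 'Z_s * 'Z_s := (p.1, - p.1 - p.2)%R.
Definition mtr s (a b : 'Z_s) (p : 'Z_s * 'Z_s) : 'Z_s * 'Z_s := (p.1 + a, p.2 + b)%R.

Lemma mm0K s : involutive (@mm0 s).
Proof. by case=> x y; rewrite /mm0 /=; congr pair; ring. Qed.
Lemma mm1K s : involutive (@mm1 s).
Proof. by case=> x y. Qed.
Lemma mm2K s : involutive (@mm2 s).
Proof. by case=> x y; rewrite /mm2 /=; congr pair; ring. Qed.
Lemma mtrK s a b : cancel (@mtr s a b) (@mtr s (- a) (- b))%R.
Proof. by case=> x y; rewrite /mtr /=; congr pair; ring. Qed.

Definition h0 s : {perm 'Z_s * 'Z_s} := perm (can_inj (@mm0K s)).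
Definition h1 s : {perm 'Z_s * 'Z_s} := perm (can_inj (@mm1K s)).
Definition h2 s : {perm 'Z_s * 'Z_s} := perm (can_inj (@mm2K s)).
Definition htr s a b : {perm 'Z_s * 'Z_s} := perm (can_inj (@mtrK s a b)).

Ltac permsolve := apply/permP; case=> x y;
  rewrite ?expgS ?expg0 ?mulg1 ?perm1 ?permM ?permE /mm0 /mm1 /mm2 /mtr /=;
  congr pair; ring.

Lemma h0_2 s : (h0 s) ^+ 2 = 1. Proof. permsolve. Qed.
Lemma h1_2 s : (h1 s) ^+ 2 = 1. Proof. permsolve. Qed.
Lemma h2_2 s : (h2 s) ^+ 2 = 1. Proof. permsolve. Qed.
Lemma h01_3 s : (h0 s * h1 s) ^+ 3 = 1. Proof. permsolve. Qed.
Lemma h02_3 s : (h0 s * h2 s) ^+ 3 = 1. Proof. permsolve. Qed.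
Lemma h12_3 s : (h1 s * h2 s) ^+ 3 = 1. Proof. permsolve. Qed.
Lemma hu s : h0 s * h1 s * h2 s * h1 s = htr (-1)%R 0%R. Proof. permsolve. Qed.
Lemma hv s : h1 s * h0 s * h1 s * h2 s = htr 0%R (-1)%R. Proof. permsolve. Qed.
Lemma htrX s a b n : (htr a b) ^+ n = htr (a *+ n)%R (b *+ n)%R :> {perm 'Z_s * 'Z_s}.
Proof.
elim: n => [|n IH]; first by apply/permP; case=> x y; rewrite expg0 perm1 permE /mtr /= !mulr0n !addr0.
rewrite expgSr IH; apply/permP; case=> x y; rewrite permM !permE /mtr /=.
by rewrite !mulrSr !addrA.
Qed.

Lemma htr00 s : htr 0%R 0%R = 1 :> {perm 'Z_s * 'Z_s}.
Proof. by apply/permP; case=> x y; rewrite perm1 permE /mtr /= !addr0. Qed.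

Lemma hu_s s : 1 < s -> (h0 s * h1 s * h2 s * h1 s) ^+ s = 1.
Proof.
move=> s2; rewrite hu htrX mulNrn mul0rn.
have -> : (1 *+ s : 'Z_s)%R = 0%R by rewrite pchar_Zp.
by rewrite oppr0 htr00.
Qed.

Lemma htrM s a b c d : htr a b * htr c d = htr (a + c)%R (b + d)%R :> {perm 'Z_s * 'Z_s}.
Proof. by apply/permP; case=> x y; rewrite permM !permE /mtr /= !addrA. Qed.

Lemma htr_in s (K : {group {perm 'Z_s * 'Z_s}}) a b :
  h0 s \in K -> h1 s \in K -> h2 s \in K -> htr a b \in K.
Proof.
move=> K0 K1 K2.
have Ku : htr (-1)%R 0%R \in K by rewrite -hu !groupM.
have Kv : htr 0%R (-1)%R \in K by rewrite -hv !groupM.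
have -> : htr a b = (htr (-1)%R 0%R) ^+ (val (- a)%R) * (htr 0%R (-1)%R) ^+ (val (- b)%R).
  rewrite !htrX htrM !mulNrn !mul0rn !natr_Zp !opprK addr0 add0r //.
by rewrite groupM // groupX.
Qed.

Definition Wk s (k : nat) : {perm 'Z_s * 'Z_s} :=
  nth 1 [:: 1; h1 s; h2 s; h1 s * h2 s; h2 s * h1 s; h1 s * h2 s * h1 s] k.

Definition psi s (q : ('Z_s * 'Z_s) * 'I_6) : {perm 'Z_s * 'Z_s} :=
  Wk s q.2 * htr q.1.1 q.1.2.

Lemma Wk0 s (k : 'I_6) : Wk s k (0%R, 0%R) = (0%R, 0%R).
Proof.
case: k => [[|[|[|[|[|[|//]]]]]] Hk]; rewrite /Wk /= ?perm1 ?permM ?permE /mm1 /mm2 /=.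
  all: congr pair; ring. Qed.


Definition e1v s (k : nat) : 'Z_s * 'Z_s :=
  nth (0,0)%R [:: (1,0); (0,1); (1,-1); (0,-1); (-1,1); (-1,0)]%R k.
Definition e2v s (k : nat) : 'Z_s * 'Z_s :=
  nth (0,0)%R [:: (0,1); (1,0); (0,-1); (1,-1); (-1,0); (-1,1)]%R k.

Lemma Wk_e1 s (k : 'I_6) : Wk s k (1%R, 0%R) = e1v s k.
Proof.
case: k => [[|[|[|[|[|[|//]]]]]] Hk]; rewrite /Wk /e1v /= ?perm1 ?permM ?permE /mm1 /mm2 /=.
all: congr pair; ring. Qed.
Lemma Wk_e2 s (k : 'I_6) : Wk s k (0%R, 1%R) = e2v s k.
Proof.
case: k => [[|[|[|[|[|[|//]]]]]] Hk]; rewrite /Wk /e2v /= ?perm1 ?permM ?permE /mm1 /mm2 /=.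
all: congr pair; ring. Qed.

Lemma Z10 s : (1 : 'Z_s)%R <> 0%R.
Proof. by move/eqP; rewrite oner_eq0. Qed.
Lemma Z01 s : (0 : 'Z_s)%R <> 1%R.
Proof. by move=> /esym; apply: Z10. Qed.
Lemma Zm0 s : (-1 : 'Z_s)%R <> 0%R.
Proof. by move/eqP; rewrite oppr_eq0 oner_eq0. Qed.
Lemma Z0m s : (0 : 'Z_s)%R <> (-1)%R.
Proof. by move=> /esym; apply: Zm0. Qed.

Ltac zc := match goal with
| H : (1%R = 0%R) |- _ => case: (Z10 H)
| H : (0%R = 1%R) |- _ => case: (Z01 H)
| H : ((-1)%R = 0%R) |- _ => case: (Zm0 H)
| H : (0%R = (-1)%R) |- _ => case: (Z0m H)
end.

Lemma psi_inj s : injective (@psi s).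
Proof.
case=> [[a b] k] [[a' b'] k'] E.
have E0 := congr1 (fun q : {perm _} => q (0%R, 0%R)) E.
move: E0; rewrite /psi /= !permM !Wk0 !permE /mtr /= !add0r => -[Ea Eb].
subst a' b'; move/mulIg: E => E; congr pair.
have E1 := congr1 (fun q : {perm _} => q (1%R, 0%R)) E.
have E2 := congr1 (fun q : {perm _} => q (0%R, 1%R)) E.
move: E1 E2 {E}; rewrite !Wk_e1 !Wk_e2.
case: k => [[|[|[|[|[|[|//]]]]]] Hk]; case: k' => [[|[|[|[|[|[|//]]]]]] Hk'];
  rewrite /e1v /e2v /=; try by move=> _ _; apply: val_inj.
all: move=> E1 E2; have e1 := congr1 fst E1; have e2 := congr1 snd E1; have e3 := congr1 fst E2; have e4 := congr1 snd E2; simpl in e1, e2, e3, e4; zc.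
Qed.

Lemma card_Zs s : 1 < s -> #|{: 'Z_s}| = s.
Proof. by move=> s2; rewrite card_ord Zp_cast. Qed.

Lemma model_card s (K : {group {perm 'Z_s * 'Z_s}}) : 1 < s ->
  h0 s \in K -> h1 s \in K -> h2 s \in K -> (6 * s * s <= #|K|)%N.
Proof.
move=> s2 K0 K1 K2.
have sub : [set psi q | q in [set: ('Z_s * 'Z_s) * 'I_6]] \subset K.
  apply/subsetP=> _ /imsetP [[[a b] k] _ ->]; rewrite /psi groupM ?htr_in //.
  case: k => [[|[|[|[|[|[|//]]]]]] Hk]; rewrite /Wk /= ?group1 ?groupM //.
have := subset_leq_card sub; rewrite card_imset; last exact: psi_inj.
rewrite cardsT !card_prod !card_ord.
have -> : ((Zp_trunc s).+2 * (Zp_trunc s).+2 * 6 = 6 * s * s)%N.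
  by rewrite Zp_cast // mulnC mulnA.
by [].
Qed.

Lemma h2_neq1 s : h2 s != 1.
Proof.
apply/eqP => /(congr1 (fun q : {perm 'Z_s * 'Z_s} => (q (1%R, 0%R)).2)).
rewrite perm1 permE /mm2 /= subr0; exact: Zm0.
Qed.

End Model.
Import Model.

Module Aux.
Set Implicit Arguments.
Unset Strict Implicit.
Unset Printing Implicit Defensive.
Local Open Scope group_scope.


Definition prF (aT : finGroupType) (rT : finType) (to : {action aT &-> rT})
  (G : {set aT}) (S : {set rT}) (n : nat) (x0 : rT) (a : aT) (i : 'I_n) : 'I_n :=
  if a \in G then insubd i (index (to (nth x0 (enum S) i) a) (enum S)) else i.

Lemma perm_rep (aT : finGroupType) (rT : finType) (to : {action aT &-> rT})
  (G : {group aT}) (S : {set rT}) (n : nat) (x0 : rT) :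
  [acts G, on S | to] -> [faithful G, on S | to] -> [transitive G, on S | to] ->
  #|S| = n ->
  exists f : {morphism G >-> {perm 'I_n}},
    'injm f /\ [transitive f @* G, on [set: 'I_n] | 'P].
Proof.
move=> /actsP actsGS ffulGS transGS cardS.
pose e := enum S.
have sz : size e = n by rewrite -cardE.
have ue : uniq e by apply: enum_uniq.
pose pt (i : 'I_n) := nth x0 e i.
have ptS i : pt i \in S by rewrite -mem_enum mem_nth // sz.
have pt_inj : injective pt.
  by move=> i j /eqP; rewrite nth_uniq ?sz // => /eqP /val_inj.
have ptF a i : a \in G -> pt (@prF _ _ to G S n x0 a i) = to (pt i) a.
  move=> aG; rewrite /pt /prF aG val_insubd.
  have inS : to (pt i) a \in e by rewrite mem_enum actsGS.
  have -> : index (to (pt i) a) e < n by rewrite -sz index_mem.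
  by rewrite nth_index.
have F_inj a : injective (@prF _ _ to G S n x0 a).
  case aG: (a \in G); last by move=> i j; rewrite /prF aG.
  move=> i j Eij; have := congr1 pt Eij.
  by rewrite !ptF // => /act_inj /pt_inj.
pose fp a := perm (F_inj a).
have fpE a i : a \in G -> pt (fp a i) = to (pt i) a by move=> aG; rewrite permE ptF.
have fpM : {in G &, {morph fp : x y / x * y}}.
  move=> a b aG bG; apply/permP=> i; apply: pt_inj.
  by rewrite permM !fpE ?groupM // actM.
exists (Morphism fpM); split.
  apply/injmP=> a b aG bG /= Eab.
  apply/eqP; rewrite eq_mulgV1; apply/eqP.
  apply: (faithfulP ffulGS); first by rewrite groupM ?groupV.
  move=> y yS; have ye : y \in e by rewrite mem_enum.
  have ii : index y e < n by rewrite -sz index_mem.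
  have ey : pt (Ordinal ii) = y by rewrite /pt /= nth_index.
  rewrite /= actM -{1}ey -fpE // Eab fpE // ey actK //.
have [x xS _] := (imsetP transGS).
have xe : x \in e by rewrite mem_enum.
have ii : index x e < n by rewrite -sz index_mem.
pose i0 := Ordinal ii.
suff -> : [set: 'I_n] = orbit 'P (Morphism fpM @* G) i0 by apply: atrans_orbit.
apply/setP=> j; rewrite inE; apply/esym/orbitP.
have [a aG Ea] := atransP2 transGS (ptS i0) (ptS j).
exists (fp a); first by rewrite -[fp a]/(Morphism fpM a) mem_morphim.
by apply: pt_inj; rewrite /= fpE.
Qed.


Definition Lt (gT : finGroupType) (a b c : gT) (i : nat) : gT :=
  match i with 0 => a | 1 => b | _ => c end.
Definition evw (gT : finGroupType) (a b c : gT) (w : seq nat) : gT :=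
  foldr (fun i g => Lt a b c i * g) 1 w.

Definition amove (m : nat * nat) (w : seq nat) : seq nat :=
  let: (k, p) := m in
  if k == 0 then
    (if (nth 0 w p == nth 0 w p.+1) && (p.+1 < size w)
     then take p w ++ drop p.+2 w else w)
  else if k == 4 then
    (if (nth 0 w p == nth 0 w p.+2) && (p.+2 < size w)
     then take p w ++ [:: nth 0 w p.+1; nth 0 w p; nth 0 w p.+1] ++ drop p.+3 w
     else w)
  else take p w ++ [:: k.-1; k.-1] ++ drop p w.

Lemma evw_cat (gT : finGroupType) (a b c : gT) w1 w2 :
  evw a b c (w1 ++ w2) = evw a b c w1 * evw a b c w2.
Proof. by elim: w1 => [|i w IH] /=; rewrite ?mul1g // IH mulgA. Qed.

Lemma amove_ev (gT : finGroupType) (a b c : gT) m w :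
  (forall i, Lt a b c i * Lt a b c i = 1) ->
  (forall i j, Lt a b c i * Lt a b c j * Lt a b c i = Lt a b c j * Lt a b c i * Lt a b c j) ->
  evw a b c (amove m w) = evw a b c w.
Proof.
move=> inv br; case: m => k p /=.
case: ifP => [_|_].
  case: ifP => [/andP [/eqP E Hp] | _ //].
  rewrite -[in RHS](cat_take_drop p w) !evw_cat (drop_nth 0 (ltnW Hp)).
  by rewrite (drop_nth 0 Hp) /= E [Lt _ _ _ _ * (_ * _)]mulgA inv mul1g.
case: ifP => [_|_].
  case: ifP => [/andP [/eqP E Hp] | _ //].
  rewrite -[in RHS](cat_take_drop p w) !evw_cat (drop_nth 0 (ltnW (ltnW Hp))).
  rewrite (drop_nth 0 (ltnW Hp)) (drop_nth 0 Hp) /= E; congr (_ * _).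
  by rewrite !mulgA br.
by rewrite -[in RHS](cat_take_drop p w) !evw_cat /= [Lt _ _ _ _ * (_ * _)]mulgA inv mul1g.
Qed.

Lemma chain_ev (gT : finGroupType) (a b c : gT) ms w1 w2 :
  (forall i, Lt a b c i * Lt a b c i = 1) ->
  (forall i j, Lt a b c i * Lt a b c j * Lt a b c i = Lt a b c j * Lt a b c i * Lt a b c j) ->
  foldl (fun w m => amove m w) w1 ms = w2 -> evw a b c w1 = evw a b c w2.
Proof.
move=> inv br; elim: ms w1 => [|m ms IH] w1 /=; first by move->.
by move=> /IH <-; rewrite amove_ev.
Qed.

Lemma braid (gT : finGroupType) (x y : gT) :
  x * x = 1 -> y * y = 1 -> (x * y) ^+ 3 = 1 -> x * y * x = y * x * y.
Proof.
move=> xx yy e3.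
have h : x * y * x * (y * x * y) = 1 by rewrite -e3 !expgS expg0 mulg1 !mulgA.
have xi : x^-1 = x by apply/eqP; rewrite eq_invg_mul xx.
have yi : y^-1 = y by apply/eqP; rewrite eq_invg_mul yy.
have : (x * y * x)^-1 = y * x * y by apply/eqP; rewrite eq_invg_mul h.
by rewrite !invMg xi yi mulgA.
Qed.

End Aux.
Import Aux.

Local Open Scope group_scope.

Theorem mainTheorem7 (s d : nat) (gT : finGroupType) (G : {group gT})
  (r0 r1 r2 : gT) :
  2 <= s -> 0 < d -> d %| s ->
  presents_G s G r0 r1 r2 ->
  let u := r0 * r1 * r2 * r1 in
  let H := <[u ^+ d]> <*> <[r0]> in
  [/\ <[u ^+ d]> ><| <[r0]> = H,
      core_free H G,
      #|G : H| = (3 * d * s)%N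
    & exists f : {morphism G >-> {perm 'I_(3 * d * s)%N}},
        'injm f /\ [transitive f @* G, on [set: 'I_(3 * d * s)%N] | 'P]].
Proof.
move=> s2 d0 ds [eqG rels univ] u H.
have rels0 := rels.
move: rels; rewrite /rels_G => -[[a2 b2 c2] [[ab3 ac3 bc3] us]].
have sq (x : gT) : x ^+ 2 = 1 -> x * x = 1 by rewrite expg2.
have aa := sq _ a2; have bb := sq _ b2; have cc := sq _ c2.
have br01 := braid aa bb ab3; have br02 := braid aa cc ac3; have br12 := braid bb cc bc3.
have inv i : Lt r0 r1 r2 i * Lt r0 r1 r2 i = 1 by case: i => [|[|i]].
have br i j : Lt r0 r1 r2 i * Lt r0 r1 r2 j * Lt r0 r1 r2 i =
              Lt r0 r1 r2 j * Lt r0 r1 r2 i * Lt r0 r1 r2 j.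
  by case: i => [|[|i]]; case: j => [|[|j]] /=; rewrite ?br01 ?br02 ?br12.
have invE (x : gT) : x * x = 1 -> x^-1 = x by move=> xx; apply/eqP; rewrite eq_invg_mul xx.
have ai := invE _ aa; have bi := invE _ bb; have ci := invE _ cc.
pose v := r1 * r0 * r1 * r2.
pose ui := r1 * r2 * r1 * r0.
pose vi := r2 * r1 * r0 * r1.
have W_uv : u * v = v * u.
  have := @chain_ev _ r0 r1 r2 [:: (0,3); (2,0); (4,1); (4,3); (4,5)]%N
    [:: 0; 1; 2; 1; 1; 0; 1; 2]%N [:: 1; 0; 1; 2; 0; 1; 2; 1]%N inv br erefl.
  by rewrite /evw /= !mulg1 !mulgA.
have W_cuc : r2 * u * r2 = u * vi.
  have := @chain_ev _ r0 r1 r2 [:: (4,2); (0,4); (4,0); (2,1); (3,2); (4,3)]%N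
    [:: 2; 0; 1; 2; 1; 2]%N [:: 0; 1; 2; 1; 2; 1; 0; 1]%N inv br erefl.
  by rewrite /evw /= ?mulg1 ?mulgA /u /v /ui /vi ?mulgA.
have W_ava : r0 * v * r0 = ui * v.
  have := @chain_ev _ r0 r1 r2 [:: (4,0); (0,2); (4,1); (2,2); (1,3); (4,4)]%N
    [:: 0; 1; 0; 1; 2; 0]%N [:: 1; 2; 1; 0; 1; 0; 1; 2]%N inv br erefl.
  by rewrite /evw /= ?mulg1 ?mulgA /u /v /ui /vi ?mulgA.
have W_uui : u * ui = 1.
  have := @chain_ev _ r0 r1 r2 [:: (0,3); (0,2); (0,1); (0,0)]%N
    [:: 0; 1; 2; 1; 1; 2; 1; 0]%N [:: ]%N inv br erefl.
  by rewrite /evw /= ?mulg1 ?mulgA /u /v /ui /vi ?mulgA.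
have W_vvi : v * vi = 1.
  have := @chain_ev _ r0 r1 r2 [:: (0,3); (0,2); (0,1); (0,0)]%N
    [:: 1; 0; 1; 2; 2; 1; 0; 1]%N [:: ]%N inv br erefl.
  by rewrite /evw /= ?mulg1 ?mulgA /u /v /ui /vi ?mulgA.
have W_bub : r1 * u * r1 = v.
  have := @chain_ev _ r0 r1 r2 [:: (0,4)]%N
    [:: 1; 0; 1; 2; 1; 1]%N [:: 1; 0; 1; 2]%N inv br erefl.
  by rewrite /evw /= ?mulg1 ?mulgA /u /v /ui /vi ?mulgA.
have W_bvb : r1 * v * r1 = u.
  have := @chain_ev _ r0 r1 r2 [:: (0,0)]%N
    [:: 1; 1; 0; 1; 2; 1]%N [:: 0; 1; 2; 1]%N inv br erefl.
  by rewrite /evw /= ?mulg1 ?mulgA /u /v /ui /vi ?mulgA.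
have W_cvc : r2 * v * r2 = vi.
  have := @chain_ev _ r0 r1 r2 [:: (0,4)]%N
    [:: 2; 1; 0; 1; 2; 2]%N [:: 2; 1; 0; 1]%N inv br erefl.
  by rewrite /evw /= ?mulg1 ?mulgA /u /v /ui /vi ?mulgA.
have W_aua : r0 * u * r0 = ui.
  have := @chain_ev _ r0 r1 r2 [:: (0,0)]%N
    [:: 0; 0; 1; 2; 1; 0]%N [:: 1; 2; 1; 0]%N inv br erefl.
  by rewrite /evw /= ?mulg1 ?mulgA /u /v /ui /vi ?mulgA.
have W_a : r0 = u * (r1 * r2 * r1).
  have := @chain_ev _ r0 r1 r2 [:: (2,1); (3,2); (2,3)]%N
    [:: 0]%N [:: 0; 1; 2; 1; 1; 2; 1]%N inv br erefl.
  by rewrite /evw /= ?mulg1 ?mulgA /u /v /ui /vi ?mulgA.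
have W_bbcb : r1 * (r1 * r2) * r1 = r2 * r1.
  have := @chain_ev _ r0 r1 r2 [:: (0,0)]%N
    [:: 1; 1; 2; 1]%N [:: 2; 1]%N inv br erefl.
  by rewrite /evw /= ?mulg1 ?mulgA /u /v /ui /vi ?mulgA.
have W_bccb : r1 * r2 * (r2 * r1) = 1.
  have := @chain_ev _ r0 r1 r2 [:: (0,1); (0,0)]%N
    [:: 1; 2; 2; 1]%N [:: ]%N inv br erefl.
  by rewrite /evw /= ?mulg1 ?mulgA /u /v /ui /vi ?mulgA.
have W_c : r2 = r1 * (r1 * r2).
  have := @chain_ev _ r0 r1 r2 [:: (2,0)]%N
    [:: 2]%N [:: 1; 1; 2]%N inv br erefl.
  by rewrite /evw /= ?mulg1 ?mulgA /u /v /ui /vi ?mulgA.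
have r0G : r0 \in G by rewrite eqG mem_gen // !inE eqxx.
have r1G : r1 \in G by rewrite eqG mem_gen // !inE eqxx orbT.
have r2G : r2 \in G by rewrite eqG mem_gen // !inE eqxx !orbT.
have uG : u \in G by rewrite /u !groupM.
have vG : v \in G by rewrite /v !groupM.
pose T := (<[u]> <*> <[v]>)%G.
pose W := (<[r1 * r2]> <*> <[r1]>)%G.
have uT : u \in T by rewrite /T /= (subsetP (joing_subl _ _)) // cycle_id.
have vT : v \in T by rewrite /T /= (subsetP (joing_subr _ _)) // cycle_id.
have conjI (x y : gT) : y * y = 1 -> x ^ y = y * x * y.
  by move=> yy; rewrite conjgE (invE _ yy) ?mulgA.
have normT x : u ^ x \in T -> v ^ x \in T -> T :^ x \subset T.
  move=> hu hv.
  by rewrite /T /= conjYg -!cycleJ join_subG !cycle_subG hu hv.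
have uiE : ui = u^-1 by apply/eqP; rewrite eq_sym eq_invg_mul W_uui.
have viE : vi = v^-1 by apply/eqP; rewrite eq_sym eq_invg_mul W_vvi.
have GN : G \subset 'N(T).
  rewrite eqG gen_subG; apply/subsetP=> x; rewrite !inE => /orP [/orP [] | ] /eqP ->;
    apply: normT; rewrite conjI //.
  - by rewrite W_aua uiE groupV.
  - by rewrite W_ava uiE groupM ?groupV.
  - by rewrite W_bub.
  - by rewrite W_bvb.
  - by rewrite W_cuc viE groupM ?groupV.
  - by rewrite W_cvc viE groupV.
have UV : <[u]> \subset 'C(<[v]>) by apply: cents_cycle.
have TE : (T : {set gT}) = <[u]> * <[v]> by rewrite /T /= norm_joinEl ?cents_norm.
have bcV : (r1 * r2)^-1 = r2 * r1 by apply/eqP; rewrite eq_invg_mul W_bccb.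
have r1n : r1 \in 'N(<[r1 * r2]>).
  by apply/normP; rewrite -cycleJ conjI // W_bbcb -bcV cycleV.
have WE : (W : {set gT}) = <[r1 * r2]> * <[r1]> by rewrite /W /= norm_joinEr // cycle_subG.
have WG : W \subset G by rewrite /W /= join_subG !cycle_subG groupM.
have WN : W \subset 'N(T) := subset_trans WG GN.
have bcW : r1 * r2 \in W by rewrite /W /= (subsetP (joing_subl _ _)) // cycle_id.
have bW : r1 \in W by rewrite /W /= (subsetP (joing_subr _ _)) // cycle_id.
have inT x : x \in T -> x \in (T <*> W)%G by move=> xT; rewrite (subsetP (joing_subl _ _)).
have inW x : x \in W -> x \in (T <*> W)%G by move=> xT; rewrite (subsetP (joing_subr _ _)).
have GK : G \subset (T <*> W)%G.
  rewrite eqG gen_subG; apply/subsetP=> x; rewrite !inE => /orP [/orP [] | ] /eqP ->.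
  - by rewrite W_a; apply: groupM; [exact: (inT u uT) | exact: (inW _ (groupM bcW bW))].
  - exact: (inW r1 bW).
  - by rewrite W_c; exact: (inW _ (groupM bW bcW)).
have GTW : G \subset T * W by rewrite -(norm_joinEr WN).
have relsH : rels_G s (h0 s) (h1 s) (h2 s).
  split; first by split; [exact: h0_2 | exact: h1_2 | exact: h2_2].
  split; first by split; [exact: h01_3 | exact: h02_3 | exact: h12_3].
  exact: hu_s.
have [f [f0 f1 f2]] := univ _ _ _ _ relsH.
have lowG : 6 * s * s <= #|G|.
  apply: leq_trans (leq_morphim f G).
  apply: (@model_card s (f @* G)%G) => //.
  - by rewrite -f0; apply: mem_morphim.
  - by rewrite -f1; apply: mem_morphim.
  - by rewrite -f2; apply: mem_morphim.
have s0 : 0 < s by apply: ltnW.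
have ou : #[u] <= s by apply: dvdn_leq => //; rewrite order_dvdn; apply/eqP; exact: us.
have vE : v = u ^ r1 by rewrite conjI // W_bub.
have ov : #[v] <= s.
  by apply: dvdn_leq => //; rewrite order_dvdn vE -conjXg; apply/eqP; rewrite us conj1g.
have obc : #[r1 * r2] <= 3 by apply: dvdn_leq => //; rewrite order_dvdn bc3.
have ob : #[r1] <= 2 by apply: dvdn_leq => //; rewrite order_dvdn b2.
have cT := mul_cardG <[u]>%G <[v]>%G; rewrite /= -TE in cT.
have cW := mul_cardG <[r1 * r2]>%G <[r1]>%G; rewrite /= -WE in cW.
have cTW := mul_cardG T W.
have GTWc := subset_leq_card GTW.
have p1 := cardG_gt0 (<[u]> :&: <[v]>)%G.
have p2 := cardG_gt0 (<[r1 * r2]> :&: <[r1]>)%G.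
have p3 := cardG_gt0 (T :&: W)%G.
rewrite /= in p1 p2 p3.
have [ordu eUI eTI eG] := arith s2 cT cW cTW GTWc p1 p2 p3 lowG ou ov obc ob.
have TW1 : T :&: W = 1 by apply/eqP; rewrite -[T :&: W]/(gval (T :&: W)%G) trivg_card1 eTI.
have UV1 : <[u]> :&: <[v]> = 1.
  by apply/eqP; rewrite -[_ :&: _]/(gval (<[u]> :&: <[v]>)%G) trivg_card1 eUI.
have r0T : r0 \notin T.
  apply/negP => r0T.
  have bcbT : r1 * r2 * r1 \in T.
    have : u^-1 * r0 \in T by rewrite groupM ?groupV.
    by rewrite [in X in X \in _]W_a mulKg.
  have : r1 * r2 * r1 \in T :&: W by rewrite inE bcbT groupM.
  rewrite TW1 inE => /eqP E.
  have r2e : r2 = 1.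
    have -> : r2 = r1 * (r1 * r2 * r1) * r1.
      by rewrite !mulgA bb mul1g -mulgA bb mulg1.
    by rewrite E mulg1 bb.
  by have := h2_neq1 s; rewrite -f2 r2e morph1 eqxx.
have r0n1 : r0 != 1 by apply: contraNneq r0T => ->; exact: group1.
have or0 : #[r0] = 2.
  have h1 : #[r0] %| 2 by rewrite order_dvdn a2.
  have h2 : #[r0] != 1%N by rewrite order_eq1.
  have h3 := dvdn_leq (isT : 0 < 2) h1.
  have h4 := order_gt0 r0.
  move: h2 h3 h4; case: #[r0] => [|[|[|k]]] //.
have r0c x : x \in <[r0]> -> x = 1 \/ x = r0.
  case/cycleP => i ->; rewrite -expg_mod_order or0.
  have : i %% 2 < 2 by rewrite ltn_mod.
  by case: (i %% 2) => [|[|k]] // _; [left; exact: expg0 | right; exact: expg1].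
have r0nud : r0 \in 'N(<[u ^+ d]>).
  by apply/normP; rewrite -cycleJ conjXg conjI // W_aua uiE expVgn cycleV.
have uT' : <[u]> \subset T by rewrite cycle_subG.
have udT : <[u ^+ d]> \subset T by apply: subset_trans (cycleX u d) _.
have udTI : <[u ^+ d]> :&: <[r0]> = 1.
  apply/trivgP/subsetP => x /setIP [xu xr].
  have [->|xr0] := r0c x xr; first exact: group1.
  by case/negP: r0T; rewrite -xr0 (subsetP udT).
have HE : H = <[u ^+ d]> * <[r0]> by rewrite /H norm_joinEr // cycle_subG.
have HG : H \subset G by rewrite /H join_subG !cycle_subG groupX.
have cH : #|H| = (s %/ d * 2)%N.
  have := mul_cardG <[u ^+ d]>%G <[r0]>%G; rewrite /= udTI cards1 muln1 -HE => <-.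
  change (#[u ^+ d] * #[r0] = s %/ d * 2)%N.
  have ds' : d %| #[u] by move: ordu ds; change (#[u] = s -> d %| s -> d %| #[u]) => ->.
  rewrite orderXdiv //; move: ordu or0.
  by change (#[u] = s -> #[r0] = 2 -> (#[u] %/ d * #[r0])%N = (s %/ d * 2)%N) => -> ->.
have idx : #|G : H| = (3 * d * s)%N.
  have L := Lagrange HG; rewrite cH eG in L.
  have sE : s = (s %/ d * d)%N by rewrite divnK.
  have k0 : 0 < s %/ d by rewrite divn_gt0 // dvdn_leq.
  have k2 : 0 < (s %/ d * 2)%N by rewrite muln_gt0 k0.
  apply/eqP; rewrite -(eqn_pmul2l k2) L; apply/eqP.
  have e : forall k d s, (k * 2 * (3 * d * s) = 6 * (k * d) * s)%N.
    by move=> k d' s'; rewrite !mulnA (mulnC k 2%N) -!mulnA [(k * (3 * _))%N]mulnCA mulnA.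
  by rewrite e -sE.
have cf : core_free H G.
  move=> N nN sNH.
  have NnG := normal_norm nN.
  have NsG := normal_sub nN.
  have hdec x : x \in N -> exists2 y, y \in <[u]> & (x = y \/ x = y * r0).
    move=> xN; move: (subsetP sNH x xN); rewrite HE => /mulsgP [y z yu zr ->].
    exists y; first exact: (subsetP (cycleX u d)).
    by case: (r0c z zr) => ->; [left; rewrite mulg1 | right].
  have step1 x : x \in N -> x \in T -> x = 1.
    move=> xN xT.
    have h (z : gT) : z \in N -> z \in T -> z \in <[u]>.
      move=> zN zT; have [y yu [->|zE]] := hdec z zN => //.
      case/negP: r0T; have : y^-1 * z \in T by rewrite groupM ?groupV // (subsetP uT').
      by rewrite zE mulKg.
    have xu := h x xN xT.
    have x1N : x ^ r1 \in N by rewrite memJ_norm // (subsetP NnG).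
    have x1T : x ^ r1 \in T by rewrite memJ_norm // (subsetP GN).
    have x1v : x ^ r1 \in <[v]> by rewrite vE cycleJ memJ_conjg.
    have : x ^ r1 \in <[u]> :&: <[v]> by rewrite inE h.
    by rewrite UV1 inE conjg_eq1 => /eqP.
  apply/trivgP/subsetP => x xN; rewrite inE; apply/eqP.
  have xG : x \in G := subsetP NsG x xN.
  have xv : commute x v.
    have xc1 : [~ x, v] \in N by rewrite commgEl groupM ?groupV // memJ_norm // (subsetP NnG).
    have xc2 : [~ x, v] \in T by rewrite commgEr groupM // memJ_norm ?groupV // (subsetP GN).
    by apply/commgP/eqP; apply: step1.
  have [y yu [xE|xE]] := hdec x xN.
    by apply: step1; rewrite // xE (subsetP uT').
  exfalso.
  have yv : commute y v.
    case/cycleP: yu => k ->; apply/commute_sym/commuteX/commute_sym; exact: W_uv.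
  have r0E : r0 = y^-1 * x by rewrite xE mulKg.
  have r0v : commute r0 v.
    apply/commute_sym; rewrite r0E; apply: commuteM; last exact/commute_sym.
    by apply: commuteV; apply/commute_sym.
  have E : ui * v = v by rewrite -W_ava r0v -mulgA aa mulg1.
  have ui1 : ui = 1 by rewrite -(mulgK v ui) E mulgV.
  have u1 : u = 1 by apply/eqP; rewrite -invg_eq1 -uiE ui1.
  move: ordu; change (#[u] = s -> False); rewrite u1 order1 => es.
  by rewrite -es in s2.
split => //.
- by rewrite sdprodEY ?cycle_subG.
- apply: (@perm_rep _ _ 'Rs G (rcosets H G) _ set0).
  + exact: actsRs_rcosets.
  + rewrite /faithful astabRs_rcosets.
    have -> : gcore H G = 1 := cf (gcore H G)%G (gcore_normal HG) (gcore_sub H G).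
    by rewrite subsetIr.
  + exact: transRs_rcosets.
  + exact: idx.
Qed.
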